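(* Let $m$ and $e$ be positive integers with $e\mid m$. Then the greatest common divisor of the integers $(l-1)\frac{m}{e(l)}$, as $l$ ranges over the primes dividing $e$, divides $(e-1)\frac{m}{e}$.
   Context: For a positive integer $t$ and a prime $l$, $t(l)$ denotes the largest power of $l$ dividing $t$. *)

(* Defs.v *)
From mathcomp Require Import all_boot.
Set Implicit Arguments.
Unset Strict Implicit.
Unset Printing Implicit Defensive.

Definition ppart (t l : nat) : nat := l ^ logn l t.

(* Main.v *)
Require Import Defs.
From mathcomp Require Import all_boot zify.

Lemma biggcd_dvd_seq (s : seq nat) (F : nat -> nat) l :
  l \in s -> \big[gcdn/0]_(x <- s) F x %| F l.
Proof.
elim: s => [//|a s IH]; rewrite inE big_cons => /orP [/eqP->|H].
  by apply: dvdn_gcdl.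
by apply: dvdn_trans (dvdn_gcdr _ _) (IH H).
Qed.

Lemma e_prod e : 0 < e -> e = \prod_(l <- primes e) ppart e l.
Proof.
move=> he; rewrite {1}(prod_prime_decomp he) prime_decompE big_map.
by apply: eq_bigr.
Qed.

Lemma prod_mod1 (s : seq nat) (F : nat -> nat) k :
  (forall l, l \in s -> F l = 1 %[mod k]) -> \prod_(l <- s) F l = 1 %[mod k].
Proof.
elim: s => [|a s IH] H; first by rewrite big_nil.
rewrite big_cons -modnMml H ?mem_head // modnMml mul1n IH // => l Hl.
by apply: H; rewrite inE Hl orbT.
Qed.

Lemma pow_mod1 l a k : k %| l - 1 -> 0 < l -> l ^ a = 1 %[mod k].
Proof.
move=> Hk Hl.
have Hl1 : l = 1 %[mod k].
  by apply/eqP; rewrite eqn_mod_dvd.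
by rewrite -modnXm Hl1 modnXm exp1n.
Qed.

Theorem mainTheorem12 (m e : nat) (hm : 0 < m) (he : 0 < e) (hem : e %| m) :
  (\big[gcdn/0]_(l <- primes e) ((l - 1) * (m %/ ppart e l))) %| (e - 1) * (m %/ e).
Proof.
have [->|e1] := eqVneq e 1; first by rewrite (_ : primes 1 = [::]) // big_nil.
set g := \big[gcdn/0]_(l <- _) _.
have e1' : 1 < e by rewrite ltn_neqAle eq_sym e1 he.
set M := m %/ e.
have Mpos : 0 < M by rewrite divn_gt0 // dvdn_leq.
have hmM : m = M * e by rewrite divnK.
have ppd l : ppart e l %| e by rewrite /ppart -p_part dvdn_part.
have lprime l : l \in primes e -> prime l.
  by rewrite mem_primes => /andP [].
have ppos l : l \in primes e -> 0 < ppart e l.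
  by move=> Hl; rewrite /ppart expn_gt0 prime_gt0 ?lprime.
have Hdiv l : l \in primes e -> g %| (l - 1) * M * (e %/ ppart e l).
  move=> Hl; rewrite -mulnA muln_divA // -hmM; exact: biggcd_dvd_seq.
have ypos l : l \in primes e -> 0 < e %/ ppart e l.
  by move=> Hl; rewrite divn_gt0 ?ppos // dvdn_leq.
have lpos l : l \in primes e -> 0 < l - 1.
  by move=> Hl; rewrite subn_gt0 prime_gt1 ?lprime.
have Hgpos : 0 < g.
  have [l Hl] : exists l, l \in primes e.
    by exists (pdiv e); rewrite mem_primes pdiv_prime // he pdiv_dvd.
  by apply: dvdn_gt0 _ (Hdiv l Hl); rewrite !muln_gt0 lpos // Mpos ypos.
have Npos : 0 < (e - 1) * M by rewrite muln_gt0 subn_gt0 e1'.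
have loglg p l : l \in primes e -> logn p g <= logn p (l - 1) + logn p M + logn p (e %/ ppart e l).
  move=> Hl; rewrite -!lognM ?muln_gt0 ?lpos ?ypos ?Mpos //; apply: dvdn_leq_log.
  - by rewrite !muln_gt0 lpos // Mpos ypos.
  - exact: Hdiv.
apply/dvdn_partP => // p; rewrite mem_primes => /and3P [pp _ _].
rewrite p_part pfactor_dvdn // lognM ?subn_gt0 //.
case Hpe: (p \in primes e).
  have := loglg p p Hpe.
  rewrite logn_div // /ppart pfactorK // subnn addn0.
  have -> : logn p (p - 1) = 0.
    apply/eqP; rewrite -leqn0 leqNgt logn_gt0 mem_primes.
    apply/negP => /and3P [_ H0 H]; have := dvdn_leq H0 H; lia.
  lia.
have lpe : logn p e = 0.
  by apply/eqP; rewrite -leqn0 leqNgt logn_gt0 Hpe.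
set k := logn p g - logn p M.
have Hk l : l \in primes e -> p ^ k %| l - 1.
  move=> Hl; rewrite pfactor_dvdn ?lpos //.
  have := loglg p l Hl; rewrite logn_div // lpe /=; lia.
have He1 : e = 1 %[mod p ^ k].
  rewrite {1}(e_prod _ he); apply: prod_mod1 => l Hl.
  by apply: pow_mod1; [apply: Hk | apply: prime_gt0; apply: lprime].
have : p ^ k %| e - 1 by rewrite -eqn_mod_dvd ?He1 // ltnW.
rewrite pfactor_dvdn ?subn_gt0 //; lia.
Qed.
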